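(* If the semigroup $\mathbb NA$ is scored, then for every $\boldsymbol\alpha\in\mathbb C^d$ the equivalence class $[\boldsymbol\alpha]$ is extreme.
   Context: $A\subset\mathbb Z^d$ is a finite set generating the group $\mathbb Z^d$; $\mathbb NA$ its monoid. For a facet $\sigma$ of the cone $\mathbb R_{\ge0}A$, $F_\sigma$ is the unique linear form (extended $\mathbb C$-linearly) with $F_\sigma(\mathbb R_{\ge0}A)\ge0$, $F_\sigma(\sigma)=0$, $F_\sigma(\mathbb Z^d)=\mathbb Z$. $\mathbb NA$ is scored if $\mathbb NA=\bigcap_{\sigma\text{ facet}}\{\mathbf a\in\mathbb Z^d:F_\sigma(\mathbf a)\in F_\sigma(\mathbb NA)\}$. For a face $\tau$, $E_\tau(\boldsymbol\alpha)=\{\boldsymbol\lambda\in\mathbb C(A\cap\tau)/\mathbb Z(A\cap\tau):\boldsymbol\alpha-\boldsymbol\lambda\in\mathbb NA+\mathbb Z(A\cap\tau)\}$, called full if it has $[\mathbb Q(A\cap\tau)\cap\mathbb Z^d:\mathbb Z(A\cap\tau)]$ elements; $\boldsymbol\alpha\sim\boldsymbol\beta$ iff $E_\tau(\boldsymbol\alpha)=E_\tau(\boldsymbol\beta)$ for all faces, $[\boldsymbol\alpha]$ the class. $\mathcal F_+(\boldsymbol\alpha)=\{\sigma:F_\sigma(\boldsymbol\alpha)\in F_\sigma(\mathbb NA)\}$. ${\rm Face}(\boldsymbol\alpha)$ is the set of faces $\tau$ such that $\boldsymbol\alpha-\boldsymbol\lambda\in\mathbb Z^d$ for some $\boldsymbol\lambda\in\mathbb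 C(A\cap\tau)$ and every facet containing $\tau$ lies in $\mathcal F_+(\boldsymbol\alpha)$. $[\boldsymbol\alpha]$ is extreme if $E_\tau(\boldsymbol\alpha)$ is full for all $\tau\in{\rm Face}(\boldsymbol\alpha)$ and empty for all $\tau\notin{\rm Face}(\boldsymbol\alpha)$. *)

(* Defs.v *)
From HB Require Import structures.
From mathcomp Require Import all_boot all_order all_algebra.
From mathcomp Require Import reals.
From mathcomp Require Import complex.
Set Implicit Arguments.
Unset Strict Implicit.
Unset Printing Implicit Defensive.
Import Order.TTheory GRing.Theory Num.Theory.
Local Open Scope ring_scope.

Section Defs.
Variables (R : realType) (d : nat).
Local Notation C := (R[i]).
Local Notation ZV := 'rV[int]_d.
Local Notation RV := 'rV[R]_d.
Local Notation CV := 'rV[C]_d.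

Definition toQ (a : ZV) : 'rV[rat]_d := map_mx (fun z : int => z%:~R) a.
Definition toR (a : ZV) : RV := map_mx (fun z : int => z%:~R) a.
Definition toC (a : ZV) : CV := map_mx (fun z : int => z%:~R) a.

Definition dotZ (F a : ZV) : int := \sum_(i < d) F 0 i * a 0 i.
Definition dotR (w x : RV) : R := \sum_(i < d) w 0 i * x 0 i.
Definition dotC (F : ZV) (x : CV) : C := \sum_(i < d) (F 0 i)%:~R * x 0 i.

Definition Zspan (S : seq ZV) (z : ZV) : Prop :=
  exists c : 'I_(size S) -> int, z = \sum_(i < size S) c i *: S`_i.
Definition Nspan (S : seq ZV) (z : ZV) : Prop :=
  exists c : 'I_(size S) -> nat, z = \sum_(i < size S) (c i)%:Z *: S`_i.
Definition Qspan (S : seq ZV) (q : 'rV[rat]_d) : Prop :=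
  exists c : 'I_(size S) -> rat, q = \sum_(i < size S) c i *: toQ S`_i.
Definition Cspan (S : seq ZV) (x : CV) : Prop :=
  exists c : 'I_(size S) -> C, x = \sum_(i < size S) c i *: toC S`_i.

Definition in_NA (A : seq ZV) (z : ZV) : Prop := Nspan A z.
Definition in_cone (A : seq ZV) (x : RV) : Prop :=
  exists c : 'I_(size A) -> R,
    (forall i, 0 <= c i) /\ x = \sum_(i < size A) c i *: toR A`_i.

Definition generates (A : seq ZV) : Prop := forall z : ZV, Zspan A z.

Definition rankR (S : seq ZV) : nat := \rank (\matrix_(i < size S) toR S`_i).

(* A face tau of the cone is cut out by a supporting linear form w:
   w >= 0 on the cone and tau = cone /\ ker w. *)
Definition supporting (A : seq ZV) (w : RV) : Prop :=
  forall x, in_cone A x -> 0 <= dotR w x.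
Definition in_face (A : seq ZV) (w : RV) (x : RV) : Prop :=
  in_cone A x /\ dotR w x = 0.
Definition Aface (A : seq ZV) (w : RV) : seq ZV :=
  [seq a <- A | dotR w (toR a) == 0].

(* Facets sigma are identified with their primitive forms F_sigma:
   F integral (F(Z^d) \subset Z), F >= 0 on the cone, the face cut out by F
   has dimension d-1, and F(Z^d) = Z. *)
Definition facet_form (A : seq ZV) (F : ZV) : Prop :=
  supporting A (toR F) /\
  rankR (Aface A (toR F)) = d.-1 /\
  exists z : ZV, dotZ F z = 1.

Definition scored (A : seq ZV) : Prop :=
  forall z : ZV, in_NA A z <->
    (forall F, facet_form A F -> exists u, in_NA A u /\ dotZ F z = dotZ F u).

Definition Fplus (A : seq ZV) (alpha : CV) (F : ZV) : Prop :=
  exists u, in_NA A u /\ dotC F alpha = (dotZ F u)%:~R.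

Definition in_Face (A : seq ZV) (alpha : CV) (w : RV) : Prop :=
  (exists lam, Cspan (Aface A w) lam /\ exists z : ZV, alpha - lam = toC z) /\
  (forall F, facet_form A F ->
     (forall x, in_face A w x -> dotR (toR F) x = 0) -> Fplus A alpha F).

(* "the set of cosets modulo H of elements satisfying P has exactly n elements",
   via a system of n pairwise incongruent representatives *)
Definition ncosets (V : zmodType) (P H : V -> Prop) (n : nat) : Prop :=
  exists f : 'I_n -> V,
    (forall i, P (f i)) /\
    (forall i j, H (f i - f j) -> i = j) /\
    (forall v, P v -> exists i, H (v - f i)).

(* lambda (a representative in C(A\cap tau)) defines an element of E_tau(alpha) *)
Definition E_pred (A : seq ZV) (alpha : CV) (S : seq ZV) (lam : CV) : Prop :=
  Cspan S lam /\
  exists u z : ZV, in_NA A u /\ Zspan S z /\ alpha - lam = toC (u + z).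

Definition index_is (S : seq ZV) (n : nat) : Prop :=
  ncosets (fun z : ZV => Qspan S (toQ z)) (Zspan S) n.

Definition E_full (A : seq ZV) (alpha : CV) (S : seq ZV) : Prop :=
  exists n, index_is S n /\
    ncosets (E_pred A alpha S) (fun x : CV => exists z, Zspan S z /\ x = toC z) n.

Definition E_empty (A : seq ZV) (alpha : CV) (S : seq ZV) : Prop :=
  forall lam, ~ E_pred A alpha S lam.

Definition extreme (A : seq ZV) (alpha : CV) : Prop :=
  forall w : RV, supporting A w ->
    (in_Face A alpha w -> E_full A alpha (Aface A w)) /\
    (~ in_Face A alpha w -> E_empty A alpha (Aface A w)).

End Defs.

(* Main.v *)
Require Import Defs.
From mathcomp Require Import all_boot all_order all_algebra.
From mathcomp Require Import reals complex.
From mathcomp Require Import zify ring.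
From Stdlib Require Import Classical ClassicalEpsilon.
Set Implicit Arguments.
Unset Strict Implicit.
Unset Printing Implicit Defensive.
Import Order.TTheory GRing.Theory Num.Theory.
Local Open Scope ring_scope.

Section P.
Variables (R : realType) (d : nat).
Local Notation C := (R[i]).
Local Notation ZV := 'rV[int]_d.

Lemma toC_D (a b : ZV) : toC R (a + b) = toC R a + toC R b.
Proof. exact: (map_mxD intr). Qed.
Lemma toC_N (a : ZV) : toC R (- a) = - toC R a.
Proof. exact: (map_mxN intr). Qed.
Lemma toC_B (a b : ZV) : toC R (a - b) = toC R a - toC R b.
Proof. by rewrite toC_D toC_N. Qed.
Lemma toC_Z (c : int) (a : ZV) : toC R (c *: a) = c%:~R *: toC R a.
Proof. exact: (map_mxZ intr). Qed.
Lemma toC_0 : toC R (0 : ZV) = 0.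
Proof. exact: (map_mx0 intr). Qed.
Lemma toC_inj (a b : ZV) : toC R a = toC R b -> a = b.
Proof.
move=> h; apply/matrixP => i j; have := congr1 (fun m : matrix _ 1 d => m i j) h.
by rewrite !mxE => /eqP; rewrite eqr_int => /eqP.
Qed.
Lemma toQ_D (a b : ZV) : toQ (a + b) = toQ a + toQ b.
Proof. exact: (map_mxD intr). Qed.
Lemma toQ_N (a : ZV) : toQ (- a) = - toQ a.
Proof. exact: (map_mxN intr). Qed.
Lemma toQ_B (a b : ZV) : toQ (a - b) = toQ a - toQ b.
Proof. by rewrite toQ_D toQ_N. Qed.
Lemma toQ_Z (c : int) (a : ZV) : toQ (c *: a) = c%:~R *: toQ a.
Proof. exact: (map_mxZ intr). Qed.
Lemma toQ_inj (a b : ZV) : toQ a = toQ b -> a = b.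
Proof.
move=> h; apply/matrixP => i j; have := congr1 (fun m : matrix _ 1 d => m i j) h.
by rewrite !mxE => /eqP; rewrite eqr_int => /eqP.
Qed.

Lemma dotZ_D F (a b : ZV) : dotZ F (a + b) = dotZ F a + dotZ F b.
Proof. by rewrite /dotZ -big_split; apply: eq_bigr => i _; rewrite mxE mulrDr. Qed.
Lemma dotZ_N F (a : ZV) : dotZ F (- a) = - dotZ F a.
Proof. by rewrite /dotZ -sumrN; apply: eq_bigr => i _; rewrite mxE mulrN. Qed.
Lemma dotZ_B F (a b : ZV) : dotZ F (a - b) = dotZ F a - dotZ F b.
Proof. by rewrite dotZ_D dotZ_N. Qed.
Lemma dotZ_Z F c (a : ZV) : dotZ F (c *: a) = c * dotZ F a.
Proof. by rewrite /dotZ mulr_sumr; apply: eq_bigr => i _; rewrite mxE mulrCA. Qed.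
Lemma dotZ_0 F : dotZ F (0 : ZV) = 0.
Proof. by rewrite /dotZ big1 // => i _; rewrite mxE mulr0. Qed.
Lemma dotZ_sum F m (c : 'I_m -> int) (v : 'I_m -> ZV) :
  dotZ F (\sum_(i < m) c i *: v i) = \sum_(i < m) c i * dotZ F (v i).
Proof.
elim/big_rec2: _ => [|i y1 y2 _ <-]; first exact: dotZ_0.
by rewrite dotZ_D dotZ_Z.
Qed.

Lemma dotC_D F (a b : 'rV[C]_d) : dotC F (a + b) = dotC F a + dotC F b.
Proof. by rewrite /dotC -big_split; apply: eq_bigr => i _; rewrite mxE mulrDr. Qed.
Lemma dotC_N F (a : 'rV[C]_d) : dotC F (- a) = - dotC F a.
Proof. by rewrite /dotC -sumrN; apply: eq_bigr => i _; rewrite mxE mulrN. Qed.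
Lemma dotC_Z F c (a : 'rV[C]_d) : dotC F (c *: a) = c * dotC F a.
Proof. by rewrite /dotC mulr_sumr; apply: eq_bigr => i _; rewrite mxE mulrCA. Qed.
Lemma dotC_0 F : dotC F (0 : 'rV[C]_d) = 0.
Proof. by rewrite /dotC big1 // => i _; rewrite mxE mulr0. Qed.
Lemma dotC_sum F m (c : 'I_m -> C) (v : 'I_m -> 'rV[C]_d) :
  dotC F (\sum_(i < m) c i *: v i) = \sum_(i < m) c i * dotC F (v i).
Proof.
elim/big_rec2: _ => [|i y1 y2 _ <-]; first exact: dotC_0.
by rewrite dotC_D dotC_Z.
Qed.
Lemma dotC_toC F (a : ZV) : dotC F (toC R a) = (dotZ F a)%:~R.
Proof. by rewrite /dotC /dotZ rmorph_sum; apply: eq_bigr => i _; rewrite mxE rmorphM. Qed.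
Lemma dotR_toR F (a : ZV) : dotR (toR R F) (toR R a) = (dotZ F a)%:~R.
Proof. by rewrite /dotR /dotZ rmorph_sum; apply: eq_bigr => i _; rewrite !mxE rmorphM. Qed.


Lemma in_cone_mem (A : seq ZV) a : a \in A -> in_cone A (toR R a).
Proof.
move=> aA; have := aA; rewrite -index_mem => lt.
exists (fun j : 'I_(size A) => (j == Ordinal lt)%:R); split.
  by move=> j; case: (j == _).
rewrite (bigD1 (Ordinal lt)) //= eqxx scale1r big1 ?addr0 ?nth_index //.
by move=> j /negbTE ->; rewrite scale0r.
Qed.

Lemma vanish_Aface (A : seq ZV) (w : 'rV[R]_d) F :
  (forall x, in_face A w x -> dotR (toR R F) x = 0) ->
  forall a, a \in Aface A w -> dotZ F a = 0.
Proof.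
move=> hv a; rewrite mem_filter => /andP [/eqP h aA].
have /eqP := hv _ (conj (in_cone_mem aA) h).
by rewrite dotR_toR intr_eq0 => /eqP.
Qed.

Lemma Cspan_van (S : seq ZV) F (lam : 'rV[C]_d) :
  (forall a, a \in S -> dotZ F a = 0) -> Cspan S lam -> dotC F lam = 0.
Proof.
move=> hv [c ->]; rewrite dotC_sum big1 // => i _.
by rewrite dotC_toC hv ?mulr0 // mem_nth.
Qed.

Lemma Zspan_van (S : seq ZV) F z :
  (forall a, a \in S -> dotZ F a = 0) -> Zspan S z -> dotZ F z = 0.
Proof.
move=> hv [c ->]; rewrite dotZ_sum big1 // => i _.
by rewrite hv ?mulr0 // mem_nth.
Qed.

Lemma E_Fplus (A : seq ZV) (w : 'rV[R]_d) (alpha lam : 'rV[C]_d) F :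
  E_pred A alpha (Aface A w) lam ->
  (forall x, in_face A w x -> dotR (toR R F) x = 0) -> Fplus A alpha F.
Proof.
move=> [hC [u [z [hu [hz he]]]]] hv.
have hv' := vanish_Aface hv.
exists u; split => //.
have -> : alpha = lam + toC R (u + z) by rewrite -he addrC subrK.
by rewrite dotC_D (Cspan_van hv' hC) add0r dotC_toC dotZ_D (Zspan_van hv' hz) addr0.
Qed.

Lemma E_empty_part (A : seq ZV) (w : 'rV[R]_d) (alpha : 'rV[C]_d) :
  ~ in_Face A alpha w -> E_empty A alpha (Aface A w).
Proof.
move=> hn lam hE; apply: hn; split.
  case: (hE) => hC [u [z [_ [_ he]]]]; exists lam; split => //; by exists (u + z).
by move=> F _ hv; exact: E_Fplus hE hv.
Qed.


Lemma toR_Z (c : int) (a : ZV) : toR R (c *: a) = c%:~R *: toR R a.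
Proof. exact: (map_mxZ intr). Qed.
Lemma toR_inj (a b : ZV) : toR R a = toR R b -> a = b.
Proof.
move=> h; apply/matrixP => i j; have := congr1 (fun m : matrix _ 1 d => m i j) h.
by rewrite !mxE => /eqP; rewrite eqr_int => /eqP.
Qed.
Lemma dotR_Z c (w x : 'rV[R]_d) : dotR (c *: w) x = c * dotR w x.
Proof. by rewrite /dotR mulr_sumr; apply: eq_bigr => i _; rewrite mxE mulrA. Qed.
Lemma dotR_0l (x : 'rV[R]_d) : dotR 0 x = 0.
Proof. by rewrite /dotR big1 // => i _; rewrite mxE mul0r. Qed.

Lemma dotZ_ZF c F (a : ZV) : dotZ (c *: F) a = c * dotZ F a.
Proof. by rewrite /dotZ mulr_sumr; apply: eq_bigr => i _; rewrite mxE mulrA. Qed.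

Lemma sup_ge0 (A : seq ZV) F a : supporting A (toR R F) -> a \in A -> 0 <= dotZ F a.
Proof. by move=> sup aA; have := sup _ (in_cone_mem aA); rewrite dotR_toR ler0z. Qed.

Lemma d_pos F (z : ZV) : dotZ F z = 1 -> (0 < d)%N.
Proof.
move=> h; rewrite lt0n; apply/eqP => d0; move: h; rewrite /dotZ big1 //.
by move=> i; have := ltn_ord i; rewrite {2}d0.
Qed.

Lemma facet_unique (A : seq ZV) : generates A -> forall F F',
  facet_form R A F -> facet_form R A F' ->
  (forall a, a \in A -> (dotZ F a == 0) = (dotZ F' a == 0)) -> F = F'.
Proof.
move=> gen F F' [supF [rkF [z Fz]]] [supF' [rkF' [z' Fz']]] hsame.
have d0 := d_pos Fz.
set T := Aface A (toR R F).
have eT : Aface A (toR R F') = T.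
  by apply: eq_in_filter => a aA; rewrite !dotR_toR !intr_eq0 hsame.
set M := \matrix_(i < size T) toR R T`_i.
have rkM : \rank M = d.-1 := rkF.
have kerF : forall G, Aface A (toR R G) = T -> (toR R G <= kermx M^T)%MS.
  move=> G eG; rewrite sub_kermx; apply/eqP/matrixP => i j; rewrite !mxE.
  have : T`_j \in Aface A (toR R G) by rewrite eG mem_nth.
  rewrite mem_filter => /andP [/eqP h _]; rewrite -[RHS]h /dotR (ord1 i).
  by apply: eq_bigr => k _; rewrite !mxE.
have rU : \rank (kermx M^T) = 1%N.
  by rewrite mxrank_ker mxrank_tr rkM; case: (d) d0 => // n _; rewrite subSn // subnn.
have kF := kerF F erefl.
have kF' := kerF F' eT.
have fnz : toR R F != 0.
  apply/eqP => h; move: Fz => /eqP; rewrite -(eqr_int R) -dotR_toR h dotR_0l.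
  by rewrite eq_sym oner_eq0.
have [_] := mxrank_leqif_eq kF; rewrite rank_rV fnz rU eqxx => /esym /andP [_ Uf].
have /submxP [D hD] := submx_trans kF' Uf.
rewrite [D]mx11_scalar mul_scalar_mx in hD.
set k := dotZ F' z.
have hk : D 0 0 = k%:~R.
  have := congr1 (fun w => dotR w (toR R z)) hD; rewrite /= dotR_Z !dotR_toR Fz mulr1.
  by move=> <-.
rewrite hk -toR_Z in hD; have eF' := toR_inj hD.
have k1 : k * dotZ F z' = 1 by rewrite -Fz' eF' dotZ_ZF.
rewrite mulrC in k1; have := intUnitRing.unitzPl k1.
rewrite qualifE /= => /orP [] /eqP ek; rewrite eF' ek ?scale1r //.
have F0 : forall a, a \in A -> dotZ F a = 0.
  move=> a aA; have h1 := sup_ge0 supF aA; have := sup_ge0 supF' aA.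
  rewrite eF' ek dotZ_ZF mulN1r oppr_ge0 => h2.
  by apply/eqP; rewrite eq_le h1 h2.
by move: Fz; rewrite (Zspan_van F0 (gen z)).
Qed.


Lemma dedupe (V : zmodType) (H : V -> Prop) :
  (forall a b, H a -> H b -> H (a - b)) ->
  forall (L : seq V) (P : V -> Prop), (forall x, x \in L -> P x) ->
  (forall v, P v -> exists2 x, x \in L & H (v - x)) -> exists n, ncosets P H n.
Proof.
move=> Hs; have Hsym a : H a -> H (- a).
  by move=> ha; have := Hs _ _ (Hs _ _ ha ha) ha; rewrite subrr sub0r.
have Htr a b : H a -> H b -> H (a + b).
  by move=> ha hb; have := Hs _ _ ha (Hsym _ hb); rewrite opprK.
elim=> [|x L IH] P memP cov.
  exists 0%N; exists (fun i : 'I_0 => 0); split; first by case.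
  split; first by case.
  by move=> v /cov [x]; rewrite in_nil.
case: (classic (exists2 y, y \in L & H (x - y))) => [[y yL hxy]|nx].
  apply: IH => [z zL|v /cov [z]]; first by apply: memP; rewrite in_cons zL orbT.
  rewrite in_cons => /orP [/eqP ->|zL] hv; last by exists z.
  by exists y => //; have := Htr _ _ hv hxy; rewrite addrA subrK.
pose P' v := P v /\ ~ H (v - x).
have [n [f [fP [finj fcov]]]] : exists n, ncosets P' H n.
  apply: IH => [z zL|v [pv nv]].
    split; first by apply: memP; rewrite in_cons zL orbT.
    by move=> h; apply: nx; exists z => //; have := Hsym _ h; rewrite opprB.
  have [z] := cov v pv; rewrite in_cons => /orP [/eqP ->|zL] hv; first by [].
  by exists z.
exists n.+1; exists (fun i => if unlift ord0 i is Some j then f j else x).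
split.
  move=> i; case: (unliftP ord0 i) => [j _|_]; first by case: (fP j).
  by apply: memP; rewrite mem_head.
split.
  move=> i j; case: (unliftP ord0 i) => [i' ->|->]; case: (unliftP ord0 j) => [j' ->|->] //.
  - by move=> /finj ->.
  - by move=> h; case: (fP i').
  - by move=> h; case: (fP j'); move=> _ []; have := Hsym _ h; rewrite opprB.
move=> v pv; case: (classic (H (v - x))) => hv.
  by exists ord0; rewrite unlift_none.
have [j hj] := fcov v (conj pv hv).
by exists (lift ord0 j); rewrite liftK.
Qed.


Lemma facet_large (A : seq ZV) : generates A -> forall F, facet_form R A F ->
  exists b : int, forall n : int, b <= n -> exists u, in_NA A u /\ dotZ F u = n.
Proof.
move=> gen F [sup [_ [z Fz]]].
have [c hz] := gen z.
pose fi i := dotZ F A`_i.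
have fi0 : forall i : 'I_(size A), 0 <= fi i by move=> i; apply: sup_ge0 sup (mem_nth _ _).
have h1 : \sum_i c i * fi i = 1 by rewrite -Fz hz dotZ_sum.
pose N := \sum_(i < size A) fi i; pose M := \sum_(i < size A) `|c i|.
have N0 : 0 < N.
  rewrite lt_def sumr_ge0 // andbT; apply/eqP => /psumr_eq0P h.
  move: h1; rewrite big1 // => i _; rewrite h ?mulr0 //.
have M0 : 0 <= M by rewrite sumr_ge0.
have cM : forall i, `|c i| <= M.
  by move=> i; rewrite /M (bigD1 i) //= lerDl sumr_ge0.
exists (N * N * M) => n hn.
pose q := (n %/ N)%Z; pose r := (n %% N)%Z.
have hn' : n = q * N + r := divz_eq n N.
have r0 : 0 <= r by apply: modz_ge0; rewrite gt_eqF.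
have rN : r < N by apply: ltz_pmod.
have qM : N * M <= q by nia.
pose e i := q + r * c i.
have e0 : forall i, 0 <= e i.
  move=> i; have := lerNnormlW (cM i); rewrite /e; move: (c i) => ci; nia.
exists (\sum_i (absz (e i))%:Z *: A`_i); split; first by exists (fun i => absz (e i)).
rewrite dotZ_sum.
under eq_bigr => i _ do rewrite gez0_abs // /e mulrDl -mulrA.
by rewrite big_split /= -mulr_sumr -mulr_sumr h1 mulr1 -/fi -/N hn'.
Qed.


Lemma fin_uniform (X : finType) (P : X -> nat -> Prop) :
  (forall x, exists b, forall k, (b <= k)%N -> P x k) ->
  exists K, forall x k, (K <= k)%N -> P x k.
Proof.
move=> h.
suff [K hK] : exists K, forall x, x \in enum X -> forall k, (K <= k)%N -> P x k.
  by exists K => x k; apply: hK; rewrite mem_enum.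
elim: (enum X) => [|x s [K hK]]; first by exists 0%N.
have [b hb] := h x; exists (maxn b K) => y; rewrite in_cons => /orP [/eqP ->|ys] k.
  by rewrite geq_max => /andP [? _]; apply: hb.
by rewrite geq_max => /andP [_ ?]; apply: hK.
Qed.

Lemma facet_uniform (A : seq ZV) : generates A -> forall (Q : ZV -> nat -> Prop),
  (forall F, facet_form R A F -> exists b : nat, forall k, (b <= k)%N -> Q F k) ->
  exists K : nat, forall F, facet_form R A F -> forall k, (K <= k)%N -> Q F k.
Proof.
move=> gen Q hQ.
pose sg (F : ZV) : {ffun 'I_(size A) -> bool} := [ffun i : 'I_(size A) => dotZ F A`_i == 0].
suff [K hK] : exists K, forall x k, (K <= k)%N ->
   forall F, facet_form R A F -> sg F = x -> Q F k.
  by exists K => F fF k hk; apply: hK hk F fF erefl.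
apply: fin_uniform => x.
case: (classic (exists F, facet_form R A F /\ sg F = x)) => [[F0 [f0 e0]]|nx].
  have [b hb] := hQ F0 f0; exists b => k hk F fF eF.
  suff -> : F = F0 by apply: hb.
  apply: (facet_unique gen fF f0) => a aA.
  have lt : (index a A < size A)%N by rewrite index_mem.
  have := congr1 (fun g : {ffun _ -> bool} => g (Ordinal lt)) (etrans eF (esym e0)).
  by rewrite /= !ffunE /= nth_index.
by exists 0%N => k _ F fF eF; case: nx; exists F.
Qed.


Definition MQ (S : seq ZV) := \matrix_(i < size S) toQ S`_i.

Lemma toC_ratr (v : ZV) : toC R v = map_mx (ratr : rat -> C) (toQ v).
Proof. by apply/matrixP => i j; rewrite !mxE rmorph_int. Qed.

Lemma Qspan_Cspan (S : seq ZV) (v : ZV) : Qspan S (toQ v) -> Cspan S (toC R v).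
Proof.
move=> [c hc]; exists (fun i => ratr (c i)); rewrite toC_ratr hc.
apply/matrixP => i j; rewrite !mxE !summxE rmorph_sum; apply: eq_bigr => k _.
by rewrite !mxE rmorphM rmorph_int.
Qed.

Lemma Cspan_Qspan (S : seq ZV) (v : ZV) : Cspan S (toC R v) -> Qspan S (toQ v).
Proof.
move=> [c hc].
have : (toQ v <= MQ S)%MS.
  rewrite -(map_submx (ratr : {rmorphism rat -> C})) -toC_ratr.
  have -> : map_mx (ratr : rat -> C) (MQ S) = \matrix_(i < size S) toC R S`_i.
    by apply/matrixP => i j; rewrite !mxE rmorph_int.
  rewrite hc; apply/submxP; exists (\row_i c i); rewrite mulmx_sum_row.
  by apply: eq_bigr => i _; rewrite mxE rowK.
case/submxP => D hD; exists (fun i => D 0 i); rewrite hD mulmx_sum_row.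
by apply: eq_bigr => i _; rewrite rowK.
Qed.


Definition pickz (P : ZV -> Prop) : option ZV :=
  match excluded_middle_informative (exists z, P z) with
  | left h => Some (proj1_sig (constructive_indefinite_description _ h))
  | right _ => None
  end.

Lemma pickz_some P z : pickz P = Some z -> P z.
Proof.
rewrite /pickz; case: excluded_middle_informative => // h [<-].
exact: proj2_sig (constructive_indefinite_description _ h).
Qed.

Lemma pickz_ex P z : P z -> exists z', pickz P = Some z'.
Proof.
move=> hz; rewrite /pickz; case: excluded_middle_informative => h.
  by eexists.
by case: h; exists z.
Qed.

Lemma Zspan_sub (S : seq ZV) a b : Zspan S a -> Zspan S b -> Zspan S (a - b).
Proof.
move=> [ca ->] [cb ->]; exists (fun i => ca i - cb i).
by rewrite -sumrB; apply: eq_bigr => i _; rewrite scalerBl.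
Qed.

Lemma toQ_sum m (c : 'I_m -> int) (v : 'I_m -> ZV) :
  toQ (\sum_(i < m) c i *: v i) = \sum_(i < m) (c i)%:~R *: toQ (v i).
Proof.
elim/big_rec2: _ => [|i y1 y2 _ <-]; first exact: (map_mx0 intr).
by rewrite toQ_D toQ_Z.
Qed.

Lemma index_exists (S : seq ZV) : exists n, index_is S n.
Proof.
pose P := pinvmx (MQ S).
pose D : int := \prod_(i < d) \prod_(j < size S) denq (P i j).
have D0 : 0 < D by apply: prodr_gt0 => i _; apply: prodr_gt0 => j _; exact: denq_gt0.
pose E i j := numq (P i j) * (D %/ denq (P i j))%Z.
have hE : forall i j, P i j * D%:~R = (E i j)%:~R.
  move=> i j; have dv : (denq (P i j) %| D)%Z.
    by rewrite /D (bigD1 i) //= (bigD1 j) //= -mulrA dvdz_mulr.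
  rewrite /E -{1}(divzK dv) !rmorphM /= numqE; ring.
pose Pk (k : {ffun 'I_(size S) -> 'I_`|D|}) (z : ZV) :=
  toQ z = \sum_j ((((k j : nat)%:Z)%:~R / D%:~R) *: toQ S`_j).
pose L := pmap (fun k => pickz (Pk k)) (enum {ffun 'I_(size S) -> 'I_`|D|}).
apply: (@dedupe _ (Zspan S) (@Zspan_sub S) L).
  move=> x; rewrite mem_pmap => /mapP [k _ /esym /pickz_some ->].
  by eexists.
move=> v [c hc].
have sub : (toQ v <= MQ S)%MS.
  apply/submxP; exists (\row_i c i); rewrite mulmx_sum_row hc.
  by apply: eq_bigr => i _; rewrite mxE rowK.
have hv := mulmxKpV sub.
pose q := toQ v *m P.
pose N j := \sum_i v 0 i * E i j.
have hq : forall j, q 0 j * D%:~R = (N j)%:~R.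
  move=> j; rewrite /q mxE mulr_suml rmorph_sum; apply: eq_bigr => i _.
  by rewrite mxE -mulrA hE rmorphM.
pose qq j := (N j %/ D)%Z; pose rr j := (N j %% D)%Z.
have rr0 : forall j, 0 <= rr j by move=> j; apply: modz_ge0; rewrite gt_eqF.
have rrD : forall j, rr j < D by move=> j; apply: ltz_pmod.
have ltk : forall j, (absz (rr j) < absz D)%N.
  by move=> j; have := rr0 j; have := rrD j; lia.
pose k := [ffun j => Ordinal (ltk j)].
pose y' := v - \sum_j qq j *: S`_j.
have Pky : Pk k y'.
  rewrite /Pk /y' toQ_B toQ_sum -{1}hv mulmx_sum_row -sumrB; apply: eq_bigr => j _.
  rewrite rowK -scalerBl ffunE /= gez0_abs //; congr (_ *: _).
  have Dn0 : (D%:~R : rat) != 0 by rewrite intr_eq0 gt_eqF.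
  apply: (mulIf Dn0); rewrite mulrBl hq mulfVK // -rmorphM -rmorphB /=.
  by congr (_%:~R); rewrite {1}(divz_eq (N j) D) addrAC subrr add0r.
have [z hz] := pickz_ex Pky.
have zy : z = y'.
  by apply: toQ_inj; rewrite (pickz_some hz) Pky.
exists z; first by rewrite mem_pmap; apply/mapP; exists k; rewrite ?mem_enum.
rewrite zy /y' opprB addrC subrK.
by exists qq.
Qed.


Lemma dotR_D2 (w x y : 'rV[R]_d) : dotR w (x + y) = dotR w x + dotR w y.
Proof. by rewrite /dotR -big_split; apply: eq_bigr => i _; rewrite mxE mulrDr. Qed.
Lemma dotR_Z2 c (w x : 'rV[R]_d) : dotR w (c *: x) = c * dotR w x.
Proof. by rewrite /dotR mulr_sumr; apply: eq_bigr => i _; rewrite mxE mulrCA. Qed.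
Lemma dotR_02 (w : 'rV[R]_d) : dotR w 0 = 0.
Proof. by rewrite /dotR big1 // => i _; rewrite mxE mulr0. Qed.
Lemma dotR_sum (w : 'rV[R]_d) m (c : 'I_m -> R) (v : 'I_m -> 'rV[R]_d) :
  dotR w (\sum_(i < m) c i *: v i) = \sum_(i < m) c i * dotR w (v i).
Proof.
elim/big_rec2: _ => [|i y1 y2 _ <-]; first exact: dotR_02.
by rewrite dotR_D2 dotR_Z2.
Qed.

Lemma van_of_Aface (A : seq ZV) (w : 'rV[R]_d) F : supporting A w ->
  (forall a, a \in Aface A w -> dotZ F a = 0) ->
  forall x, in_face A w x -> dotR (toR R F) x = 0.
Proof.
move=> sup hv x [[c [c0 ->]] hw].
rewrite dotR_sum in hw; rewrite dotR_sum.
have t0 : forall i, 0 <= c i * dotR w (toR R A`_i).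
  by move=> i; rewrite mulr_ge0 //; apply: sup; apply: in_cone_mem; exact: mem_nth.
have := psumr_eq0P (fun i _ => t0 i) hw => h.
apply: big1 => i _; have /eqP := h i isT; rewrite mulf_eq0 => /orP [/eqP ->|/eqP wi].
  by rewrite mul0r.
have : A`_i \in Aface A w by rewrite mem_filter wi eqxx mem_nth.
by move/hv; rewrite dotR_toR => ->; rewrite mulr0.
Qed.

Lemma Cspan_sub (S : seq ZV) (a b : 'rV[C]_d) : Cspan S a -> Cspan S b -> Cspan S (a - b).
Proof.
move=> [ca ->] [cb ->]; exists (fun i => ca i - cb i).
by rewrite -sumrB; apply: eq_bigr => i _; rewrite scalerBl.
Qed.

Lemma Zspan0 (S : seq ZV) : Zspan S 0.
Proof. by exists (fun _ => 0); rewrite big1 // => i _; rewrite scale0r. Qed.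

Lemma key (A : seq ZV) : generates A -> scored R A ->
  forall (w : 'rV[R]_d) (alpha lam0 : 'rV[C]_d) (beta : ZV),
  supporting A w ->
  (forall F, facet_form R A F -> (forall x, in_face A w x -> dotR (toR R F) x = 0) ->
     Fplus A alpha F) ->
  Cspan (Aface A w) lam0 -> alpha - lam0 = toC R beta ->
  forall v, Qspan (Aface A w) (toQ v) ->
  exists u z, in_NA A u /\ Zspan (Aface A w) z /\ beta + v = u + z.
Proof.
move=> gen sc w alpha lam0 beta sup hF hl hb v hv.
set S := Aface A w.
pose g := beta + v.
pose s := \sum_(j < size S) 1 *: S`_j.
have sS : forall F, supporting A (toR R F) -> 0 <= dotZ F s.
  move=> F sF; rewrite dotZ_sum sumr_ge0 // => j _; rewrite mul1r; apply: (sup_ge0 sF).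
  by have := mem_nth 0 (ltn_ord j); rewrite mem_filter => /andP [].
have hs : Zspan S s by exists (fun _ => 1).
have ea : alpha = lam0 + toC R beta by rewrite -hb addrC subrK.
have [K hK] : exists K : nat, forall F, facet_form R A F -> forall k, (K <= k)%N ->
    exists u, in_NA A u /\ dotZ F (g + k%:Z *: s) = dotZ F u.
  apply: (facet_uniform gen) => F fF.
  case: (classic (forall x, in_face A w x -> dotR (toR R F) x = 0)) => hvan.
    exists 0%N => k _; have [u [hu eu]] := hF F fF hvan.
    have hv' := vanish_Aface hvan.
    have hs0 := Zspan_van hv' hs.
    have hv0 : dotZ F v = 0.
      by apply/eqP; rewrite -(intr_eq0 C) -dotC_toC (Cspan_van hv' (Qspan_Cspan hv)).
    exists u; split => //.
    rewrite dotZ_D dotZ_Z hs0 mulr0 addr0 /g dotZ_D hv0 addr0.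
    apply/eqP; rewrite -(eqr_int C) -eu ea dotC_D (Cspan_van hv' hl) add0r dotC_toC.
    by [].
  have [j hj] : exists j : 'I_(size S), dotZ F S`_j != 0.
    case: (classic (exists j : 'I_(size S), dotZ F S`_j != 0)) => // hn.
    case: hvan; apply: van_of_Aface sup _ => a aS.
    have lt : (index a S < size S)%N by rewrite index_mem.
    apply/eqP; apply: contraT => ha; case: hn; exists (Ordinal lt).
    by rewrite /= nth_index.
  have [supF _] := fF.
  have jA : S`_j \in A.
    by have := mem_nth 0 (ltn_ord j); rewrite mem_filter => /andP [].
  have hs1 : 1 <= dotZ F s.
    have h0 := sup_ge0 supF jA.
    have : dotZ F S`_j <= dotZ F s.
      rewrite dotZ_sum (bigD1 j) //= mul1r lerDl sumr_ge0 // => i _.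
      rewrite mul1r; apply: (sup_ge0 supF).
      by have := mem_nth 0 (ltn_ord i); rewrite mem_filter => /andP [].
    move: hj h0; move: (dotZ F S`_j) (dotZ F s) => x y; lia.
  have [b0 hb0] := facet_large gen fF.
  exists (absz b0 + absz (dotZ F g))%N => k hk.
  have hn : b0 <= dotZ F g + k%:Z * dotZ F s.
    move: hk hs1; move: (dotZ F g) (dotZ F s) => x y; nia.
  have [u [hu eu]] := hb0 _ hn.
  by exists u; split => //; rewrite dotZ_D dotZ_Z eu.
have hin : in_NA A (g + K%:Z *: s).
  by apply/(proj2 (sc _)) => F fF; apply: hK fF _ (leqnn K).
exists (g + K%:Z *: s), (- (K%:Z *: s)); split => //; split.
  exists (fun _ => - K%:Z); rewrite /s scaler_sumr -sumrN; apply: eq_bigr => j _.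
  by rewrite scalerA mulr1 scaleNr.
by rewrite addrK.
Qed.


Lemma subsub (V : zmodType) (a x y : V) : (a - x) - (a - y) = y - x.
Proof. by rewrite opprB addrC addrA subrK. Qed.

Lemma full_part (A : seq ZV) : generates A -> scored R A ->
  forall (w : 'rV[R]_d) (alpha : 'rV[C]_d), supporting A w ->
  in_Face A alpha w -> E_full A alpha (Aface A w).
Proof.
move=> gen sc w alpha sup [[lam0 [hl [beta hb]]] hF].
set S := Aface A w.
have [n hn] := index_exists S.
case: (hn) => f [fP [finj fcov]].
exists n; split => //.
exists (fun i => lam0 - toC R (f i)); split; [|split].
- move=> i; split; first exact: Cspan_sub hl (Qspan_Cspan (fP i)).
  have [u [z [hu [hz e]]]] := key gen sc sup hF hl hb (fP i).
  exists u, z; split => //; split => //.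
  by rewrite opprB addrA addrAC hb -toC_D e.
- move=> i j [z [hz e]].
  apply: finj.
  have e' : f j - f i = z by apply: toC_inj; rewrite toC_B -e subsub.
  have -> : f i - f j = 0 - z by rewrite sub0r -e' opprB.
  exact: Zspan_sub (Zspan0 _) hz.
- move=> lam [hC [u [z [hu [hz he]]]]].
  pose y := u + z - beta.
  have ey : toC R y = lam0 - lam by rewrite toC_B -he -hb subsub.
  have hy : Cspan S (toC R y) by rewrite ey; exact: Cspan_sub hl hC.
  have [i hi] := fcov y (Cspan_Qspan hy).
  exists i; exists (0 - (y - f i)); split; first exact: Zspan_sub (Zspan0 _) hi.
  by rewrite sub0r toC_N toC_B ey !opprB addrCA.
Qed.

End P.

Theorem proposition8p23 (R : realType) (d : nat) (A : seq 'rV[int]_d) :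
  generates A -> scored R A ->
  forall alpha : 'rV[R[i]]_d, extreme A alpha.
Proof.
move=> gen sc alpha w sup; split.
  exact: full_part.
exact: E_empty_part.
Qed.
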